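(* (Soundness of $\mathcal{T}_{\mathrm{EFO}}$.) Every branch that is refutable in the tableau calculus $\mathcal{T}_{\mathrm{EFO}}$ is unsatisfiable.
   Context: Types: a countable set of base types including a distinguished $o$; other base types are sorts ($\alpha$). Types: base types and $\sigma\tau$ (functions from $\sigma$ to $\tau$; $\sigma\tau\mu=\sigma(\tau\mu)$). Countably many names with unique types, infinitely many per type. Terms: names; $st:\mu$ for $s:\tau\mu,t:\tau$; $\lambda x.t:\sigma\tau$ for a name $x:\sigma$, $t:\tau$. Logical constants: $\neg:oo$, $\to:ooo$, $=_\sigma:\sigma\sigma o$ for every type $\sigma$, and $\forall_\alpha:(\alpha o)o$ for every sort $\alpha$; all other names are variables. Formulas: terms of type $o$; $s=_\sigma t$ is $(=_\sigma s)t$, $s\neq_\sigma t$ is $\neg(s=_\sigma t)$, $s\to t$ is $(\to s)t$. A term is EFO if the only logical constants occurring in it are $\neg$, $\to$, $=_\alpha$ and $\forall_\alpha$ ($\alpha$ sorts); $\mathrm{EFO}_\sigma$ is the set of EFO terms of type $\sigma$. A formula is quasi-EFO if it is EFO or of the form $s\neq_\sigma t$ with $s,t$ EFO and $\sigma$ any type. Semantics: a frame $\mathcal{D}$ maps types to nonempty sets with $\mathcal{D}(\sigma\tau)\subseteq(\mathcal{D}\sigma\to\mathcal{D}\tau)$. An assignment $\mathcal{I}$ into $\mathcal{D}$ extends $\mathcal{D}$ and maps names $x:\sigma$ into $\mathcal{D}\sigma$; $\mathcal{I}^x_a$ is the update. Partial evaluation: $\hat{\mathcal{I}}x=\mathcal{I}x$;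 $\hat{\mathcal{I}}(st)=(\hat{\mathcal{I}}s)(\hat{\mathcal{I}}t)$ when defined; $\hat{\mathcal{I}}(\lambda x.s)=f$ if $\lambda x.s:\sigma\tau$, $f\in\mathcal{D}(\sigma\tau)$ and $\widehat{\mathcal{I}^x_a}s=fa$ for all $a\in\mathcal{D}\sigma$. An interpretation is an assignment with total evaluation. It is logical if $\mathcal{I}o=\{0,1\}$, $\mathcal{I}(\neg)$ is negation, $\mathcal{I}(\to)$ is implication, $\mathcal{I}(=_\sigma)$ is identity on $\mathcal{I}\sigma$, and $\mathcal{I}(\forall_\alpha)f=1$ iff $f$ is the constant function with value $1$. A set of formulas is satisfiable if some logical interpretation evaluates each of them to $1$. Normalization: fixed type-preserving total $[\cdot]$; $s$ normal iff $[s]=s$; (N1) $[[s]]=[s]$; (N2) $[[s]t]=[st]$; (N3) $[ys_1\dots s_n]=y[s_1]\dots[s_n]$ for a name $y$, $n\ge0$, $ys_1\dots s_n$ of base type; (N4) $\hat{\mathcal{I}}[s]=\hat{\mathcal{I}}s$ for every interpretation. Calculus $\mathcal{T}_{\mathrm{EFO}}$: an EFO branch is a set of normal quasi-EFO formulas. A rule instance $A/A_1\dots A_n$ has $A$ a finite EFO branch containing the premises, $A_i=A\cup$(formulas of the $i$-th alternative). A term $u$ is $\alpha$-discriminating in $A$ if $u\neq_\alpha t\in A$ or $t\neq_\alpha u\in A$ for some $t$. Rules ($x$ a variable): $\neg\neg s$ / $s$; $s\neq_ot$ / $\{s,\neg t\}\mid\{\neg s,t\}$; $s\to t$ / $\neg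 s\mid t$; $\neg(s\to t)$ / $\{s,\neg t\}$; (Mat) $xs_1\dots s_n,\neg xt_1\dots t_n$ / $s_1\neq t_1\mid\dots\mid s_n\neq t_n$ ($n\ge0$); (Dec) $xs_1\dots s_n\neq_\alpha xt_1\dots t_n$ / $s_1\neq t_1\mid\dots\mid s_n\neq t_n$ ($n\ge0$); (FE) $s\neq_{\sigma\tau}t$ / $[sx]\neq[tx]$ with $x:\sigma$ not free in $A$; (Con) $s=_\alpha t,u\neq_\alpha v$ / $\{s\neq u,t\neq u\}\mid\{s\neq v,t\neq v\}$; (All) $\forall_\alpha s$ / $[su]$ for normal $u\in\mathrm{EFO}_\alpha$; (AllN) $\neg\forall_\alpha s$ / $\neg[sx]$ with $x:\alpha$ not free in $A$. Restrictions: FE on $s\neq t$ only if no variable $x$ has $[sx]\neq[tx]\in A$; AllN on $\neg\forall_\alpha s$ only if no variable $x:\alpha$ has $\neg[sx]\in A$; All on $\forall_\alpha s\in A$: if there are $\alpha$-discriminating terms in $A$, only with those; if $[su]\notin A$ for all normal $u\in\mathrm{Wff}_\alpha$, there are no $\alpha$-discriminating terms in $A$ and some variable of type $\alpha$ occurs free in $A$, only with a variable $x:\alpha$ occurring free in $A$; if $[su]\notin A$ for all normal $u\in\mathrm{Wff}_\alpha$, there are no $\alpha$-discriminating terms and no variable of type $\alpha$ occurs free in $A$, only with a variable $x:\alpha$. Refutable branches: least set such that if $A/A_1\dots A_n$ is an admitted instance and all $A_i$ are refutable then $A$ is refutable. *)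

(* Defs.v *)
From Stdlib Require Import List PeanoNat.
Import ListNotations.

Inductive ty : Type := TB (n : nat) | TA (s t : ty).

Notation o := (TB 0).

Definition sort (a : ty) : Prop :=
  match a with TB (S _) => True | _ => False end.

Definition ty_eq_dec (a b : ty) : {a = b} + {a <> b}.
Proof. decide equality; apply Nat.eq_dec. Defined.

Definition ty_eqb (a b : ty) : bool := if ty_eq_dec a b then true else false.

(* A (variable) name is a pair (type, index): countably many, unique types,
   infinitely many per type.  The logical constants are separate names. *)
Definition name : Type := (ty * nat)%type.

Definition name_eq_dec (x y : name) : {x = y} + {x <> y}.
Proof. decide equality; [apply Nat.eq_dec | apply ty_eq_dec]. Defined.

Inductive lcon : Type := CNot | CImp | CEq (s : ty) | CAll (n : nat).

Definition ctype (c : lcon) : ty :=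
  match c with
  | CNot => TA o o
  | CImp => TA o (TA o o)
  | CEq s => TA s (TA s o)
  | CAll n => TA (TA (TB (S n)) o) o
  end.

Inductive tm : Type :=
| V (x : name)
| C (c : lcon)
| App (s t : tm)
| Lam (x : name) (s : tm).

Fixpoint tyof (s : tm) : option ty :=
  match s with
  | V x => Some (fst x)
  | C c => Some (ctype c)
  | App s t =>
      match tyof s, tyof t with
      | Some (TA a b), Some a' => if ty_eqb a a' then Some b else None
      | _, _ => None
      end
  | Lam x s => option_map (TA (fst x)) (tyof s)
  end.

Definition wt (s : tm) : Prop := exists a, tyof s = Some a.

Definition apps (h : tm) (l : list tm) : tm := fold_left App l h.

Definition Not_ (s : tm) : tm := App (C CNot) s.
Definition Imp_ (s t : tm) : tm := App (App (C CImp) s) t.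
Definition Eq_ (a : ty) (s t : tm) : tm := App (App (C (CEq a)) s) t.
Definition Neq (a : ty) (s t : tm) : tm := Not_ (Eq_ a s t).
Definition All_ (n : nat) (s : tm) : tm := App (C (CAll n)) s.
(* s <> t at the type of s (the paper's untyped notation s <> t) *)
Definition neqt (s t : tm) : tm :=
  Neq (match tyof s with Some a => a | None => o end) s t.

Fixpoint free (x : name) (s : tm) : Prop :=
  match s with
  | V y => x = y
  | C _ => False
  | App s t => free x s \/ free x t
  | Lam y s => x <> y /\ free x s
  end.

(* A frame: nonempty sets D s, with D (s t) a set of functions D s -> D t
   (represented by an injective application map). *)
Record frame : Type := {
  dom : ty -> Type;
  fn : forall s t, dom (TA s t) -> dom s -> dom t;
  fn_inj : forall s t (f g : dom (TA s t)), (forall a, fn s t f a = fn s t g a) -> f = g;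
  dom_ne : forall s, inhabited (dom s)
}.

Record asg (D : frame) : Type := {
  avar : forall x : name, dom D (fst x);
  acon : forall c : lcon, dom D (ctype c)
}.
Arguments avar {D} _ _.
Arguments acon {D} _ _.

Definition upd {D : frame} (I : asg D) (x : name) (a : dom D (fst x)) : asg D :=
  {| avar := fun y =>
       match name_eq_dec x y with
       | left e => eq_rect x (fun z => dom D (fst z)) a y e
       | right _ => avar I y
       end;
     acon := acon I |}.

Inductive eval (D : frame) : asg D -> tm -> forall a : ty, dom D a -> Prop :=
| ev_var I x : eval D I (V x) (fst x) (avar I x)
| ev_con I c : eval D I (C c) (ctype c) (acon I c)
| ev_app I s t a b f v :
    eval D I s (TA a b) f -> eval D I t a v -> eval D I (App s t) b (fn D a b f v)
| ev_lam I x s b (f : dom D (TA (fst x) b)) :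
    (forall a : dom D (fst x), eval D (upd I x a) s b (fn D (fst x) b f a)) ->
    eval D I (Lam x s) (TA (fst x) b) f.

Definition interpretation (D : frame) (I : asg D) : Prop :=
  forall s a, tyof s = Some a -> exists v, eval D I s a v.

(* Logical: D o = {0,1} (via the bijection bo), constants have their intended meaning. *)
Definition logical (D : frame) (I : asg D) (bo : dom D o -> bool) : Prop :=
  (forall p q, bo p = bo q -> p = q) /\ (forall b, exists p, bo p = b) /\
  (forall p, bo (fn D o o (acon I CNot) p) = negb (bo p)) /\
  (forall p q, bo (fn D o o (fn D o (TA o o) (acon I CImp) p) q) = implb (bo p) (bo q)) /\
  (forall s p q, bo (fn D s o (fn D s (TA s o) (acon I (CEq s)) p) q) = true <-> p = q) /\
  (forall n (f : dom D (TA (TB (S n)) o)),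
      bo (fn D (TA (TB (S n)) o) o (acon I (CAll n)) f) = true <->
      forall a, bo (fn D (TB (S n)) o f a) = true).

Definition satisfiable (A : tm -> Prop) : Prop :=
  exists (D : frame) (I : asg D) (bo : dom D o -> bool),
    interpretation D I /\ logical D I bo /\
    forall s, A s -> exists v, eval D I s o v /\ bo v = true.

Record normalizer (nf : tm -> tm) : Prop := {
  nf_ty : forall s a, tyof s = Some a -> tyof (nf s) = Some a;
  nf_N1 : forall s, wt s -> nf (nf s) = nf s;
  nf_N2 : forall s t, wt (App s t) -> nf (App (nf s) t) = nf (App s t);
  nf_N3 : forall (y : tm) (l : list tm) (b : nat),
      (exists x, y = V x) \/ (exists c, y = C c) ->
      tyof (apps y l) = Some (TB b) -> nf (apps y l) = apps y (map nf l);
  nf_N4 : forall (D : frame) (I : asg D), interpretation D I ->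
      forall s a (v : dom D a), tyof s = Some a -> (eval D I (nf s) a v <-> eval D I s a v)
}.

Fixpoint efo_consts (s : tm) : Prop :=
  match s with
  | V _ => True
  | C (CEq a) => sort a
  | C _ => True
  | App s t => efo_consts s /\ efo_consts t
  | Lam _ s => efo_consts s
  end.

Definition efo (s : tm) : Prop := wt s /\ efo_consts s.

Definition quasi_efo (s : tm) : Prop :=
  (efo s /\ tyof s = Some o) \/
  exists a u v, s = Neq a u v /\ efo u /\ efo v /\ tyof u = Some a /\ tyof v = Some a.

Definition normal (nf : tm -> tm) (s : tm) : Prop := nf s = s.

Definition efo_branch (nf : tm -> tm) (A : tm -> Prop) : Prop :=
  forall s, A s -> normal nf s /\ quasi_efo s.

Definition finite_set (A : tm -> Prop) : Prop :=
  exists l : list tm, forall s, A s <-> In s l.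

Definition free_in (x : name) (A : tm -> Prop) : Prop := exists s, A s /\ free x s.

Definition discriminating (A : tm -> Prop) (a : ty) (u : tm) : Prop :=
  exists t, A (Neq a u t) \/ A (Neq a t u).

Definition all_restr (nf : tm -> tm) (A : tm -> Prop) (n : nat) (s u : tm) : Prop :=
  let al := TB (S n) in
  ((exists u', discriminating A al u') -> discriminating A al u) /\
  ((forall u', normal nf u' -> tyof u' = Some al -> ~ A (nf (App s u'))) ->
   ~ (exists u', discriminating A al u') ->
   (exists y, fst y = al /\ free_in y A) ->
   exists x, u = V x /\ fst x = al /\ free_in x A) /\
  ((forall u', normal nf u' -> tyof u' = Some al -> ~ A (nf (App s u'))) ->
   ~ (exists u', discriminating A al u') ->
   ~ (exists y, fst y = al /\ free_in y A) ->
   exists x, u = V x /\ fst x = al).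

(* Rule instances A / A u alt_1 | ... | A u alt_n ; alternatives listed as formula lists *)
Inductive rule (nf : tm -> tm) (A : tm -> Prop) : list (list tm) -> Prop :=
| r_notnot s : A (Not_ (Not_ s)) -> rule nf A [[s]]
| r_boolext s t : A (Neq o s t) -> rule nf A [[s; Not_ t]; [Not_ s; t]]
| r_imp s t : A (Imp_ s t) -> rule nf A [[Not_ s]; [t]]
| r_nimp s t : A (Not_ (Imp_ s t)) -> rule nf A [[s; Not_ t]]
| r_mat x ss ts :
    length ss = length ts ->
    A (apps (V x) ss) -> A (Not_ (apps (V x) ts)) ->
    rule nf A (map (fun p => [neqt (fst p) (snd p)]) (combine ss ts))
| r_dec a x ss ts :
    sort a -> length ss = length ts ->
    A (Neq a (apps (V x) ss) (apps (V x) ts)) ->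
    rule nf A (map (fun p => [neqt (fst p) (snd p)]) (combine ss ts))
| r_fe a b s t (x : name) :
    A (Neq (TA a b) s t) -> fst x = a -> ~ free_in x A ->
    (forall y : name, fst y = a ->
       ~ A (Neq b (nf (App s (V y))) (nf (App t (V y))))) ->
    rule nf A [[Neq b (nf (App s (V x))) (nf (App t (V x)))]]
| r_con a s t u v :
    sort a -> A (Eq_ a s t) -> A (Neq a u v) ->
    rule nf A [[Neq a s u; Neq a t u]; [Neq a s v; Neq a t v]]
| r_all n s u :
    A (All_ n s) -> normal nf u -> efo u -> tyof u = Some (TB (S n)) ->
    all_restr nf A n s u ->
    rule nf A [[nf (App s u)]]
| r_alln n s (x : name) :
    A (Not_ (All_ n s)) -> fst x = TB (S n) -> ~ free_in x A ->
    (forall y : name, fst y = TB (S n) -> ~ A (Not_ (nf (App s (V y))))) ->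
    rule nf A [[Not_ (nf (App s (V x)))]].

(* admitted instance: A is a finite EFO branch (premises in A are part of [rule]) *)
Definition admitted (nf : tm -> tm) (A : tm -> Prop) (alts : list (list tm)) : Prop :=
  finite_set A /\ efo_branch nf A /\ rule nf A alts.

Inductive refutable (nf : tm -> tm) : (tm -> Prop) -> Prop :=
| refute A alts :
    admitted nf A alts ->
    (forall X, In X alts -> refutable nf (fun s => A s \/ In s X)) ->
    refutable nf A.

(* Main.v *)
Require Import Defs.
From Stdlib Require Import List PeanoNat Classical FunctionalExtensionality Eqdep_dec.
Import ListNotations.

Lemma asg_eq (D : frame) (I J : asg D) :
  avar I = avar J -> acon I = acon J -> I = J.
Proof. destruct I, J; simpl; intros; subst; reflexivity. Qed.

Lemma upd_same (D : frame) (I : asg D) x a : avar (upd I x a) x = a.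
Proof.
  simpl. destruct (name_eq_dec x x) as [e|n]; [|contradiction].
  rewrite (UIP_dec name_eq_dec e eq_refl). reflexivity.
Qed.

Lemma upd_other (D : frame) (I : asg D) x a y : x <> y -> avar (upd I x a) y = avar I y.
Proof. intros H. simpl. destruct (name_eq_dec x y); [contradiction|reflexivity]. Qed.

Lemma upd_upd_same (D : frame) (I : asg D) x a b : upd (upd I x b) x a = upd I x a.
Proof.
  apply asg_eq; [|reflexivity]. apply functional_extensionality_dep; intro z.
  unfold upd; simpl. destruct (name_eq_dec x z); reflexivity.
Qed.

Lemma upd_comm (D : frame) (I : asg D) x y a b : x <> y ->
  upd (upd I x b) y a = upd (upd I y a) x b.
Proof.
  intros Hxy. apply asg_eq; [|reflexivity]. apply functional_extensionality_dep; intro z.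
  unfold upd; simpl. destruct (name_eq_dec y z); destruct (name_eq_dec x z); try reflexivity.
  subst. congruence.
Qed.

Lemma eval_ty (D : frame) I s a v : eval D I s a v -> tyof s = Some a.
Proof.
  induction 1; simpl; auto.
  - rewrite IHeval1, IHeval2. unfold ty_eqb. destruct (ty_eq_dec a a); congruence.
  - destruct (dom_ne D (fst x)) as [a0]. rewrite (H0 a0). reflexivity.
Qed.

Lemma inv_app (D : frame) I s t b w : eval D I (App s t) b w ->
  exists a f v, eval D I s (TA a b) f /\ eval D I t a v /\ w = fn D a b f v.
Proof.
  intros H. remember (App s t) as u. destruct H; try discriminate.
  injection Hequ; intros; subst. eauto 10.
Qed.

Lemma inv_con (D : frame) I c w : eval D I (C c) (ctype c) w -> w = acon I c.
Proof.
  intros H.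
  assert (G : forall u a w, eval D I u a w -> u = C c ->
            forall e : a = ctype c, eq_rect a (dom D) w _ e = acon I c).
  { clear. intros u a w H. destruct H; try discriminate. intros Hu. injection Hu; intros; subst.
    rewrite (UIP_dec ty_eq_dec e eq_refl). reflexivity. }
  exact (G _ _ _ H eq_refl eq_refl).
Qed.

Lemma inv_var (D : frame) I x w : eval D I (V x) (fst x) w -> w = avar I x.
Proof.
  intros H.
  assert (G : forall u a w, eval D I u a w -> u = V x ->
            forall e : a = fst x, eq_rect a (dom D) w _ e = avar I x).
  { clear. intros u a w H. destruct H; try discriminate. intros Hu. injection Hu; intros; subst.
    rewrite (UIP_dec ty_eq_dec e eq_refl). reflexivity. }
  exact (G _ _ _ H eq_refl eq_refl).
Qed.

Lemma inv_lam (D : frame) I x s b f : eval D I (Lam x s) (TA (fst x) b) f ->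
  forall a, eval D (upd I x a) s b (fn D (fst x) b f a).
Proof.
  intros H.
  assert (G : forall u c w, eval D I u c w -> u = Lam x s ->
            forall (e : c = TA (fst x) b) a,
              eval D (upd I x a) s b (fn D (fst x) b (eq_rect c (dom D) w _ e) a)).
  { clear. intros u c w H. destruct H; try discriminate. intros Hu. injection Hu; intros; subst.
    assert (b0 = b) by congruence. subst.
    rewrite (UIP_dec ty_eq_dec e eq_refl). simpl. apply H. }
  exact (G _ _ _ H eq_refl eq_refl).
Qed.

Lemma eval_det (D : frame) I s a v : eval D I s a v -> forall v', eval D I s a v' -> v = v'.
Proof.
  induction 1; intros v' H'.
  - symmetry; apply inv_var; auto.
  - symmetry; apply inv_con; auto.
  - destruct (inv_app _ _ _ _ _ _ H') as (a' & f' & u' & H1 & H2 & ->).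
    pose proof (eval_ty _ _ _ _ _ H) as T1. pose proof (eval_ty _ _ _ _ _ H1) as T2.
    rewrite T1 in T2. injection T2 as ->.
    rewrite (IHeval1 _ H1), (IHeval2 _ H2). reflexivity.
  - apply fn_inj. intros a. apply H0. apply inv_lam. exact H'.
Qed.

Lemma coinc (D : frame) I s a v : eval D I s a v ->
  forall x b, ~ free x s -> eval D (upd I x b) s a v.
Proof.
  induction 1 as [I y|I c|I s t a0 b0 f v Hs IHs Ht IHt|I y s b0 f Hf IHf];
    intros x b Hnf; simpl in Hnf.
  - rewrite <- (upd_other D I x b y Hnf). apply ev_var.
  - exact (ev_con D (upd I x b) c).
  - eapply ev_app; [apply IHs|apply IHt]; tauto.
  - apply ev_lam. intros a. destruct (name_eq_dec x y) as [<-|Hxy].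
    + rewrite upd_upd_same. apply Hf.
    + rewrite (upd_comm D I x y a b Hxy). apply IHf. tauto.
Qed.

Lemma interp_upd (D : frame) I x a : interpretation D I -> interpretation D (upd I x a).
Proof.
  intros HI s c Hs. destruct (HI (Lam x s) (TA (fst x) c)) as [f Hf].
  { simpl. rewrite Hs. reflexivity. }
  eexists. apply inv_lam. exact Hf.
Qed.

Lemma ev_not' (D : frame) I p v : eval D I p o v ->
  eval D I (Not_ p) o (fn D o o (acon I CNot) v).
Proof. intros H. unfold Not_. eapply ev_app; [exact (ev_con D I CNot)|exact H]. Qed.

Lemma ev_eq' (D : frame) I a s t v1 v2 : eval D I s a v1 -> eval D I t a v2 ->
  eval D I (Eq_ a s t) o (fn D a o (fn D a (TA a o) (acon I (CEq a)) v1) v2).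
Proof.
  intros H1 H2. unfold Eq_. eapply ev_app; [|exact H2].
  eapply ev_app; [exact (ev_con D I (CEq a))|exact H1].
Qed.

Lemma inv_not (D : frame) I p w : eval D I (Not_ p) o w ->
  exists v, eval D I p o v /\ w = fn D o o (acon I CNot) v.
Proof.
  intros H. destruct (inv_app _ _ _ _ _ _ H) as (a & f & v & H1 & H2 & ->).
  pose proof (eval_ty _ _ _ _ _ H1) as T. simpl in T. injection T as <-.
  rewrite (inv_con D I CNot f H1). eauto.
Qed.

Lemma inv_eq (D : frame) I a s t w : eval D I (Eq_ a s t) o w ->
  exists v1 v2, eval D I s a v1 /\ eval D I t a v2 /\
    w = fn D a o (fn D a (TA a o) (acon I (CEq a)) v1) v2.
Proof.
  intros H. destruct (inv_app _ _ _ _ _ _ H) as (a1 & f & v2 & H1 & H2 & ->).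
  destruct (inv_app _ _ _ _ _ _ H1) as (a2 & g & v1 & H3 & H4 & ->).
  pose proof (eval_ty _ _ _ _ _ H3) as T. simpl in T. injection T as <- <-.
  rewrite (inv_con D I (CEq a) g H3). eauto 10.
Qed.

Lemma inv_imp (D : frame) I s t w : eval D I (Imp_ s t) o w ->
  exists v1 v2, eval D I s o v1 /\ eval D I t o v2 /\
    w = fn D o o (fn D o (TA o o) (acon I CImp) v1) v2.
Proof.
  intros H. destruct (inv_app _ _ _ _ _ _ H) as (a1 & f & v2 & H1 & H2 & ->).
  destruct (inv_app _ _ _ _ _ _ H1) as (a2 & g & v1 & H3 & H4 & ->).
  pose proof (eval_ty _ _ _ _ _ H3) as T. simpl in T. injection T as <- <-.
  rewrite (inv_con D I CImp g H3). eauto 10.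
Qed.

Lemma inv_all (D : frame) I n s w : eval D I (All_ n s) o w ->
  exists f, eval D I s (TA (TB (S n)) o) f /\
    w = fn D (TA (TB (S n)) o) o (acon I (CAll n)) f.
Proof.
  intros H. destruct (inv_app _ _ _ _ _ _ H) as (a & f & v & H1 & H2 & ->).
  pose proof (eval_ty _ _ _ _ _ H1) as T. simpl in T. injection T as <-.
  rewrite (inv_con D I (CAll n) f H1). eauto.
Qed.

Lemma app_typed s t c : tyof (App s t) = Some c ->
  exists a, tyof s = Some (TA a c) /\ tyof t = Some a.
Proof.
  simpl. destruct (tyof s) as [[|a b]|]; try discriminate.
  destruct (tyof t) as [a'|]; try discriminate.
  unfold ty_eqb. destruct (ty_eq_dec a a'); intros H; try discriminate.
  injection H as <-. subst. eauto.
Qed.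

Lemma apps_typed h l : tyof (apps h l) <> None -> tyof h <> None.
Proof.
  revert h. induction l as [|s l IH]; simpl; auto.
  intros h H. specialize (IH _ H). destruct (tyof (App h s)) eqn:E; [|congruence].
  destruct (app_typed _ _ _ E) as (a & -> & _). congruence.
Qed.

Lemma spine (D : frame) I : forall ss ts h1 h2 c, length ss = length ts ->
  (forall p, In p (combine ss ts) -> forall a v1 v2, tyof (fst p) = Some a ->
      eval D I (fst p) a v1 -> eval D I (snd p) a v2 -> v1 = v2) ->
  tyof h1 = tyof h2 ->
  (forall c0 v1 v2, eval D I h1 c0 v1 -> eval D I h2 c0 v2 -> v1 = v2) ->
  forall w1 w2, eval D I (apps h1 ss) c w1 -> eval D I (apps h2 ts) c w2 -> w1 = w2.
Proof.
  induction ss as [|s ss IH]; intros [|t ts] h1 h2 c Hl Hp Ht Hh w1 w2 E1 E2;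
    simpl in Hl; try discriminate.
  - simpl in *. eauto.
  - simpl in E1, E2. injection Hl as Hl.
    assert (T1 : tyof (App h1 s) <> None).
    { apply (apps_typed _ ss). rewrite (eval_ty _ _ _ _ _ E1). discriminate. }
    assert (T2 : tyof (App h2 t) <> None).
    { apply (apps_typed _ ts). rewrite (eval_ty _ _ _ _ _ E2). discriminate. }
    destruct (tyof (App h1 s)) as [c1|] eqn:F1; [|congruence].
    destruct (tyof (App h2 t)) as [c2|] eqn:F2; [|congruence].
    destruct (app_typed _ _ _ F1) as (a1 & G1 & _).
    destruct (app_typed _ _ _ F2) as (a2 & G2 & _).
    eapply (IH ts (App h1 s) (App h2 t) c Hl); [ | | | exact E1 | exact E2].
    + intros p Hin. apply Hp. simpl. auto.
    + rewrite F1, F2. congruence.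
    + intros c0 u1 u2 K1 K2.
      destruct (inv_app _ _ _ _ _ _ K1) as (b1 & f1 & x1 & L1 & M1 & ->).
      destruct (inv_app _ _ _ _ _ _ K2) as (b2 & f2 & x2 & L2 & M2 & ->).
      pose proof (eval_ty _ _ _ _ _ L1) as Q1. pose proof (eval_ty _ _ _ _ _ L2) as Q2.
      rewrite Ht in Q1. rewrite Q1 in Q2. injection Q2 as ->.
      rewrite (Hh _ _ _ L1 L2). rewrite (Hp (s, t) (or_introl eq_refl) b2 x1 x2
        (eval_ty _ _ _ _ _ M1) M1 M2). reflexivity.
Qed.

Definition sat (D : frame) (I : asg D) (bo : dom D o -> bool) (A : tm -> Prop) : Prop :=
  forall s, A s -> exists v, eval D I s o v /\ bo v = true.

Lemma sat_list (D : frame) I bo (l : list tm) :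
  (forall s, In s l -> exists v, eval D I s o v /\ bo v = true) -> sat D I bo (fun s => In s l).
Proof. auto. Qed.

Lemma neq_true (D : frame) I bo a p q v1 v2 : logical D I bo ->
  eval D I p a v1 -> eval D I q a v2 -> v1 <> v2 ->
  exists w, eval D I (Neq a p q) o w /\ bo w = true.
Proof.
  intros (Hinj & Hsur & Hnot & Himp & Heq & Hall) H1 H2 Hne.
  eexists. split. apply ev_not', ev_eq'; eauto.
  rewrite Hnot. destruct (bo _) eqn:E; auto. apply Heq in E. contradiction.
Qed.

Lemma neq_inv (D : frame) I bo a p q w : logical D I bo ->
  eval D I (Neq a p q) o w -> bo w = true ->
  exists v1 v2, eval D I p a v1 /\ eval D I q a v2 /\ v1 <> v2.
Proof.
  intros (Hinj & Hsur & Hnot & Himp & Heq & Hall) H Hb.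
  destruct (inv_not _ _ _ _ H) as (u & Hu & ->).
  destruct (inv_eq _ _ _ _ _ _ Hu) as (v1 & v2 & E1 & E2 & ->).
  exists v1, v2. split; [auto|split; [auto|]]. intros <-.
  rewrite Hnot in Hb. assert (bo (fn D a o (fn D a (TA a o) (acon I (CEq a)) v1) v1) = true)
    by (apply Heq; reflexivity). rewrite H0 in Hb. discriminate.
Qed.

Lemma not_true (D : frame) I bo p v : logical D I bo -> eval D I p o v -> bo v = false ->
  exists w, eval D I (Not_ p) o w /\ bo w = true.
Proof.
  intros (Hinj & Hsur & Hnot & _) H Hb. eexists. split. apply ev_not', H.
  rewrite Hnot, Hb. reflexivity.
Qed.

Lemma not_inv (D : frame) I bo p w : logical D I bo -> eval D I (Not_ p) o w -> bo w = true ->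
  exists v, eval D I p o v /\ bo v = false.
Proof.
  intros (Hinj & Hsur & Hnot & _) H Hb. destruct (inv_not _ _ _ _ H) as (v & Hv & ->).
  exists v. split; auto. rewrite Hnot in Hb. destruct (bo v); auto.
Qed.

Lemma sat_upd (D : frame) I bo A x a : sat D I bo A -> ~ free_in x A -> sat D (upd I x a) bo A.
Proof.
  intros HS Hf s Hs. destruct (HS s Hs) as (v & Hv & Hb). exists v. split; auto.
  apply coinc; auto. intros Hx. apply Hf. exists s. auto.
Qed.

Lemma pairs_equal (D : frame) I bo ss ts : logical D I bo ->
  ~ (exists p, In p (combine ss ts) /\
       exists v, eval D I (neqt (fst p) (snd p)) o v /\ bo v = true) ->
  forall p, In p (combine ss ts) -> forall a v1 v2, tyof (fst p) = Some a ->
      eval D I (fst p) a v1 -> eval D I (snd p) a v2 -> v1 = v2.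
Proof.
  intros HL Hno p Hin a v1 v2 Ht E1 E2. apply NNPP; intro Hne. apply Hno.
  exists p. split; auto. unfold neqt; rewrite Ht. eapply neq_true; eauto.
Qed.

Lemma rule_sound nf (Hnf : normalizer nf) A alts (D : frame) I bo :
  interpretation D I -> logical D I bo -> sat D I bo A -> rule nf A alts ->
  exists X, In X alts /\ exists I', interpretation D I' /\ logical D I' bo /\
    sat D I' bo A /\ sat D I' bo (fun s => In s X).
Proof.
  intros HI HL HS HR. pose proof HL as HL'.
  destruct HL' as (Hinj & Hsur & Hnot & Himp & Heq & Hall).
  destruct HR.
  -
    destruct (HS _ H) as (w & Hw & Hb).
    destruct (not_inv _ _ _ _ _ HL Hw Hb) as (u & Hu & Hub).
    destruct (inv_not _ _ _ _ Hu) as (v & Hv & ->).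
    exists [s]. split; [simpl; auto|]. exists I. split; [exact HI|split; [exact HL|split; [exact HS|]]].
    intros s' [<-|[]]. exists v. split; auto. rewrite Hnot in Hub. destruct (bo v); auto.
  -
    destruct (HS _ H) as (w & Hw & Hb).
    destruct (neq_inv _ _ _ _ _ _ _ HL Hw Hb) as (v1 & v2 & E1 & E2 & Hne).
    destruct (bo v1) eqn:B1.
    + assert (B2 : bo v2 = false).
      { destruct (bo v2) eqn:B2; auto. exfalso. apply Hne, Hinj. congruence. }
      exists [s; Not_ t]. split; [simpl; auto|]. exists I. split; [exact HI|split; [exact HL|split; [exact HS|]]].
      intros s' [<-|[<-|[]]]; eauto. eapply not_true; eauto.
    + assert (B2 : bo v2 = true).
      { destruct (bo v2) eqn:B2; auto. exfalso. apply Hne, Hinj. congruence. }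
      exists [Not_ s; t]. split; [simpl; auto|]. exists I. split; [exact HI|split; [exact HL|split; [exact HS|]]].
      intros s' [<-|[<-|[]]]; eauto. eapply not_true; eauto.
  -
    destruct (HS _ H) as (w & Hw & Hb).
    destruct (inv_imp _ _ _ _ _ Hw) as (v1 & v2 & E1 & E2 & ->).
    rewrite Himp in Hb. destruct (bo v1) eqn:B1.
    + exists [t]. split; [simpl; auto|]. exists I. split; [exact HI|split; [exact HL|split; [exact HS|]]].
      intros s' [<-|[]]. exists v2. split; auto.
    + exists [Not_ s]. split; [simpl; auto|]. exists I. split; [exact HI|split; [exact HL|split; [exact HS|]]].
      intros s' [<-|[]]. eapply not_true; eauto.
  -
    destruct (HS _ H) as (w & Hw & Hb).
    destruct (not_inv _ _ _ _ _ HL Hw Hb) as (u & Hu & Hub).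
    destruct (inv_imp _ _ _ _ _ Hu) as (v1 & v2 & E1 & E2 & ->).
    rewrite Himp in Hub. destruct (bo v1) eqn:B1, (bo v2) eqn:B2; try discriminate.
    exists [s; Not_ t]. split; [simpl; auto|]. exists I. split; [exact HI|split; [exact HL|split; [exact HS|]]].
    intros s' [<-|[<-|[]]]; eauto. eapply not_true; eauto.
  -
    destruct (classic (exists p, In p (combine ss ts) /\
       exists v, eval D I (neqt (fst p) (snd p)) o v /\ bo v = true)) as [[p [Hin Hv]]|Hno].
    + exists [neqt (fst p) (snd p)]. split.
      { apply in_map_iff. exists p. auto. }
      exists I. split; [exact HI|split; [exact HL|split; [exact HS|]]]. intros s' [<-|[]]. exact Hv.
    + exfalso.
      destruct (HS _ H0) as (w1 & Hw1 & Hb1).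
      destruct (HS _ H1) as (w & Hw & Hb).
      destruct (not_inv _ _ _ _ _ HL Hw Hb) as (w2 & Hw2 & Hb2).
      assert (w1 = w2).
      { eapply (spine D I ss ts (V x) (V x) o H); eauto.
        - eapply pairs_equal; eauto.
        - intros c0 u1 u2 K1 K2. eapply eval_det; eauto. }
      congruence.
  -
    destruct (classic (exists p, In p (combine ss ts) /\
       exists v, eval D I (neqt (fst p) (snd p)) o v /\ bo v = true)) as [[p [Hin Hv]]|Hno].
    + exists [neqt (fst p) (snd p)]. split.
      { apply in_map_iff. exists p. auto. }
      exists I. split; [exact HI|split; [exact HL|split; [exact HS|]]]. intros s' [<-|[]]. exact Hv.
    + exfalso.
      destruct (HS _ H1) as (w & Hw & Hb).
      destruct (neq_inv _ _ _ _ _ _ _ HL Hw Hb) as (w1 & w2 & E1 & E2 & Hne).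
      apply Hne. eapply (spine D I ss ts (V x) (V x) a H0); eauto.
      * eapply pairs_equal; eauto.
      * intros c0 u1 u2 K1 K2. eapply eval_det; eauto.
  -
    destruct (HS _ H) as (w & Hw & Hb).
    destruct (neq_inv _ _ _ _ _ _ _ HL Hw Hb) as (f & g & Ef & Eg & Hne).
    destruct x as [xa xn]. simpl in H0. subst xa.
    assert (Ha : exists a0, fn D a b f a0 <> fn D a b g a0).
    { apply NNPP; intro Hn. apply Hne, fn_inj. intros a0. apply NNPP; intro H'.
      apply Hn; eauto. }
    destruct Ha as (a0 & Ha0).
    set (I' := upd I (a, xn) a0).
    assert (HI' : interpretation D I') by (apply interp_upd; auto).
    assert (Fs : ~ free (a, xn) s).
    { intro F. apply H1. exists (Neq (TA a b) s t). split; auto. simpl; tauto. }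
    assert (Ft : ~ free (a, xn) t).
    { intro F. apply H1. exists (Neq (TA a b) s t). split; auto. simpl; tauto. }
    assert (Ex : eval D I' (V (a, xn)) a a0).
    { rewrite <- (upd_same D I (a, xn) a0). apply (ev_var D I' (a, xn)). }
    assert (Es : eval D I' (App s (V (a, xn))) b (fn D a b f a0)).
    { eapply ev_app; [apply coinc; eauto|exact Ex]. }
    assert (Et : eval D I' (App t (V (a, xn))) b (fn D a b g a0)).
    { eapply ev_app; [apply coinc; eauto|exact Ex]. }
    exists [Neq b (nf (App s (V (a, xn)))) (nf (App t (V (a, xn))))]. split; [simpl; auto|].
    exists I'. split; [auto|split; [exact HL|split]].
    + apply sat_upd; auto.
    + intros s' [<-|[]]. eapply neq_true; [exact HL| | |exact Ha0].
      * apply (nf_N4 nf Hnf D I' HI'); [eapply eval_ty; eauto|exact Es].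
      * apply (nf_N4 nf Hnf D I' HI'); [eapply eval_ty; eauto|exact Et].
  -
    destruct (HS _ H0) as (w & Hw & Hb).
    destruct (inv_eq _ _ _ _ _ _ Hw) as (vs & vt & Es & Et & ->).
    apply Heq in Hb. subst vt.
    destruct (HS _ H1) as (w2 & Hw2 & Hb2).
    destruct (neq_inv _ _ _ _ _ _ _ HL Hw2 Hb2) as (vu & vv & Eu & Ev & Hne).
    destruct (classic (vs = vu)) as [<-|Hsu].
    + exists [Neq a s v; Neq a t v]. split; [simpl; auto|]. exists I. split; [exact HI|split; [exact HL|split; [exact HS|]]].
      intros s' [<-|[<-|[]]]; eapply neq_true; eauto.
    + exists [Neq a s u; Neq a t u]. split; [simpl; auto|]. exists I. split; [exact HI|split; [exact HL|split; [exact HS|]]].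
      intros s' [<-|[<-|[]]]; eapply neq_true; eauto.
  -
    destruct (HS _ H) as (w & Hw & Hb).
    destruct (inv_all _ _ _ _ _ Hw) as (f & Ef & ->).
    pose proof (proj1 (Hall n f) Hb) as Hb'.
    destruct (HI u _ H2) as (vu & Eu).
    exists [nf (App s u)]. split; [simpl; auto|]. exists I. split; [exact HI|split; [exact HL|split; [exact HS|]]].
    intros s' [<-|[]]. exists (fn D (TB (S n)) o f vu). split; auto.
    assert (E : eval D I (App s u) o (fn D (TB (S n)) o f vu)) by (eapply ev_app; eauto).
    apply (nf_N4 nf Hnf D I HI); [eapply eval_ty; eauto|exact E].
  -
    destruct (HS _ H) as (w & Hw & Hb).
    destruct (not_inv _ _ _ _ _ HL Hw Hb) as (u & Hu & Hub).
    destruct (inv_all _ _ _ _ _ Hu) as (f & Ef & ->).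
    assert (Ha : exists a0, bo (fn D (TB (S n)) o f a0) = false).
    { apply NNPP; intro Hn. rewrite <- Bool.not_true_iff_false in Hub. apply Hub, Hall.
      intros a0. apply NNPP; intro H'. apply Hn. exists a0.
      apply Bool.not_true_iff_false; auto. }
    destruct Ha as (a0 & Ha0).
    destruct x as [xa xn]. simpl in H0. subst xa.
    set (I' := upd I (TB (S n), xn) a0).
    assert (HI' : interpretation D I') by (apply interp_upd; auto).
    assert (Fs : ~ free (TB (S n), xn) s).
    { intro F. apply H1. exists (Not_ (All_ n s)). split; auto. simpl; tauto. }
    assert (Ex : eval D I' (V (TB (S n), xn)) (TB (S n)) a0).
    { rewrite <- (upd_same D I (TB (S n), xn) a0). apply (ev_var D I' (TB (S n), xn)). }
    assert (Es : eval D I' (App s (V (TB (S n), xn))) o (fn D (TB (S n)) o f a0)).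
    { eapply ev_app; [apply coinc; eauto|exact Ex]. }
    exists [Not_ (nf (App s (V (TB (S n), xn))))]. split; [simpl; auto|].
    exists I'. split; [auto|split; [exact HL|split]].
    + apply sat_upd; auto.
    + intros s' [<-|[]]. eapply not_true; [exact HL| |exact Ha0].
      apply (nf_N4 nf Hnf D I' HI'); [eapply eval_ty; eauto|exact Es].
Qed.

Theorem proposition14p1 :
  forall nf : tm -> tm, normalizer nf ->
  forall A : tm -> Prop, refutable nf A -> ~ satisfiable A.
Proof.
  intros nf Hnf A HR. induction HR as [A alts [Hfin [Hbr Hrule]] Hsub IH].
  intros (D & I & bo & HI & HL & HS).
  destruct (rule_sound nf Hnf A alts D I bo HI HL HS Hrule) as (X & HX & I' & HI' & HL' & HA & HXs).
  apply (IH X HX). exists D, I', bo. split; [auto|split; [auto|]].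
  intros s [Hs|Hs]; auto.
Qed.
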